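(* Let $u\in(\mathbb{N}\cup\{0\})^m$ and put $M:=\{x\in\mathbb{R}^m:0\leq x\leq u\}$ (entrywise order) with the metric induced by $\|\cdot\|_\infty$. Then $M\cap\mathbb{Z}^m$ is the unique optimal code in $(M,\|\cdot\|_\infty)$ of size $\prod_{i=1}^m(u_i+1)$.
   Context: For a finite $C\subseteq M$, $\delta(C):=\min\{\|x-y\|_\infty:x,y\in C,x\neq y\}$. An optimal code of size $n$ is an $n$-element subset $C\subseteq M$ maximizing $\delta(C)$ among all $n$-element subsets of $M$. *)

(* Defs.v *)
From HB Require Import structures.
From mathcomp Require Import all_boot all_order all_algebra.
From mathcomp Require Import reals.
Set Implicit Arguments. Unset Strict Implicit. Unset Printing Implicit Defensive.
Import Order.TTheory GRing.Theory Num.Theory.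
Local Open Scope ring_scope.

Definition dist_inf (R : realType) (m : nat) (x y : 'rV[R]_m) : R :=
  \big[Num.max/0]_(i < m) `|x ord0 i - y ord0 i|.

Definition in_box (R : realType) (m : nat) (u : 'I_m -> nat) (x : 'rV[R]_m) : bool :=
  [forall i, (0 <= x ord0 i) && (x ord0 i <= (u i)%:R)].

Definition box_lattice (R : realType) (m : nat) (u : 'I_m -> nat) : pred 'rV[R]_m :=
  [pred x | in_box u x && [forall i, x ord0 i \is a Num.int]].

(* A finite code is a duplicate-free list of points.
   delta C = min { ||x - y||_oo : x, y in C, x <> y } (0 by convention if C has < 2 points). *)
Definition code_dists (R : realType) (m : nat) (C : seq 'rV[R]_m) : seq R :=
  [seq dist_inf p.1 p.2 | p <- [seq (x, y) | x <- C, y <- C] & p.1 != p.2].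

Definition delta (R : realType) (m : nat) (C : seq 'rV[R]_m) : R :=
  let ds := code_dists C in \big[Num.min/head 0 ds]_(d <- ds) d.

Definition is_code (R : realType) (m : nat) (u : 'I_m -> nat) (n : nat)
  (C : seq 'rV[R]_m) : Prop :=
  [/\ uniq C, size C = n & all (in_box u) C].

Definition optimal_code (R : realType) (m : nat) (u : 'I_m -> nat) (n : nat)
  (C : seq 'rV[R]_m) : Prop :=
  is_code u n C /\ forall C' : seq 'rV[R]_m, is_code u n C' -> delta C' <= delta C.

(* Main.v *)
Require Import Defs.
From HB Require Import structures.
From mathcomp Require Import all_boot all_order all_algebra.
From mathcomp Require Import reals.
From mathcomp Require Import zify ring lra.
Import Order.TTheory GRing.Theory Num.Theory.
Local Open Scope ring_scope.
Set Implicit Arguments. Unset Strict Implicit.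

Section S.
Variables (R : realType) (m : nat) (u : 'I_m -> nat).

Definition LT := {dffun forall i : 'I_m, 'I_(u i).+1}.
Definition vec (f : LT) : 'rV[R]_m := \row_i ((f i : nat)%:R).
Definition Lat : seq 'rV[R]_m := map vec (enum LT).

Lemma vec_inj : injective vec.
Proof.
move=> f g /rowP H; apply/ffunP => i; apply/val_inj.
by have := H i; rewrite !mxE => /eqP; rewrite eqr_nat => /eqP.
Qed.

Lemma Lat_uniq : uniq Lat.
Proof. by rewrite map_inj_uniq ?enum_uniq //; apply: vec_inj. Qed.

Lemma Lat_size : size Lat = (\prod_(i < m) (u i).+1)%N.
Proof.
rewrite size_map -cardE card_dep_ffun foldr_map.
rewrite enumT unlock /reducebig /index_enum /=.
elim: (Finite.enum _) => [|a s IH]; rewrite ?big_nil ?big_cons //= size_enum_ord IH. all: reflexivity. Qed.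

Lemma Lat_mem x : (x \in Lat) = (x \in box_lattice u).
Proof.
apply/mapP/idP.
- case=> f _ ->; rewrite /box_lattice inE /in_box; apply/andP; split; apply/forallP => i; rewrite mxE.
  + by rewrite ler0n ler_nat -ltnS ltn_ord.
  + exact: natr_int.
- rewrite /box_lattice inE /in_box => /andP [/forallP Hb /forallP Hi].
  have Hn i : x ord0 i \is a Num.nat.
    by rewrite natrEint Hi; case/andP: (Hb i).
  have Hle i : (Num.truncn (x ord0 i) < (u i).+1)%N.
    by rewrite ltnS -(ler_nat R) truncnK //; case/andP: (Hb i).
  exists [ffun i => Ordinal (Hle i)]; first by rewrite mem_enum.
  apply/rowP => i; rewrite !mxE ffunE /= truncnK // [i]ord1.
Qed.

Lemma dist_ge (x y : 'rV[R]_m) i : `|x ord0 i - y ord0 i| <= dist_inf x y.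
Proof. by rewrite /dist_inf (bigD1 i) //= le_max lexx. Qed.

Lemma dist_lt1 (x y : 'rV[R]_m) : (forall i, `|x ord0 i - y ord0 i| < 1) -> dist_inf x y < 1.
Proof.
move=> H; rewrite /dist_inf; apply: (big_ind (fun v => v < 1)) => //.
by move=> a b Ha Hb; rewrite gt_max Ha Hb.
Qed.

Lemma dist_le1 (x y : 'rV[R]_m) : (forall i, `|x ord0 i - y ord0 i| <= 1) -> dist_inf x y <= 1.
Proof.
move=> H; rewrite /dist_inf; apply: (big_ind (fun v => v <= 1)) => //.
by move=> a b Ha Hb; rewrite ge_max Ha Hb.
Qed.

Lemma bigmin_le (s : seq R) idx d : d \in s -> \big[Num.min/idx]_(e <- s) e <= d.
Proof.
elim: s => // a s IH; rewrite inE big_cons => /orP [/eqP -> | H].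
  by rewrite ge_min lexx.
by rewrite ge_min IH ?orbT.
Qed.

Lemma delta_le (C : seq 'rV[R]_m) d : d \in code_dists C -> delta C <= d.
Proof. exact: bigmin_le. Qed.

Lemma delta_ge (C : seq 'rV[R]_m) b : code_dists C != [::] ->
  (forall d, d \in code_dists C -> b <= d) -> b <= delta C.
Proof.
rewrite /delta; case: (code_dists C) => // a s _ H /=.
rewrite big_seq; apply: (big_ind (fun v => b <= v)).
- by apply: H; rewrite mem_head.
- by move=> x y Hx Hy; rewrite le_min Hx Hy.
- by move=> i; apply: H.
Qed.

Lemma mem_code_dists (C : seq 'rV[R]_m) x y : x \in C -> y \in C -> x != y ->
  dist_inf x y \in code_dists C.
Proof.
move=> Hx Hy Hxy; rewrite /code_dists; apply/mapP; exists (x, y) => //.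
by rewrite mem_filter /= Hxy; apply/allpairsP; exists (x, y).
Qed.

Lemma code_dists_mem (C : seq 'rV[R]_m) d : d \in code_dists C ->
  exists x y, [/\ x \in C, y \in C, x != y & d = dist_inf x y].
Proof.
rewrite /code_dists => /mapP [[x y]]; rewrite mem_filter /= => /andP [Hxy] /allpairsP [[a b]] /= [Ha Hb [Ex Ey]] ->.
by subst; exists a, b. Qed.

Lemma small_eq (C : seq 'rV[R]_m) x y : (size C <= 1)%N -> x \in C -> y \in C -> x = y.
Proof.
by case: C => [|a [|b s]] //= _; rewrite !inE => /eqP -> /eqP ->.
Qed.

Lemma small_dists (C : seq 'rV[R]_m) : (size C <= 1)%N -> code_dists C = [::].
Proof.
move=> H; apply/eqP; apply/negPn/negP; case: (code_dists C) (@code_dists_mem C) => // d s Hm _.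
have [x [y [Hx Hy Hxy _]]] := Hm d (mem_head _ _).
by move: Hxy; rewrite (small_eq H Hx Hy) eqxx.
Qed.

Lemma small_delta (C : seq 'rV[R]_m) : (size C <= 1)%N -> delta C = 0.
Proof. by move=> H; rewrite /delta small_dists // big_nil. Qed.

Lemma large_dists (C : seq 'rV[R]_m) : uniq C -> (2 <= size C)%N -> code_dists C != [::].
Proof.
case: C => [|a [|b s]] //= /andP [Ha _] _.
have Hab : a != b by apply: contraNneq Ha => ->; rewrite mem_head.
have Hb : b \in [:: a, b & s] by rewrite !inE eqxx orbT.
have := mem_code_dists (mem_head a (b :: s)) Hb Hab.
by case: (code_dists _).
Qed.

Lemma int_dist (a b : R) : a \is a Num.int -> b \is a Num.int -> a != b -> 1 <= `|a - b|.
Proof.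
move=> Ha Hb Hab.
have Hn : `|a - b| \is a Num.nat by apply: natr_norm_int; apply: rpredB.
case/natrP: Hn => n Hn; rewrite Hn ler1n lt0n; apply: contra_neq Hab => Hn0.
by apply/eqP; rewrite -subr_eq0 -normr_eq0 Hn Hn0.
Qed.


Lemma seq_psum_eq0 (T : eqType) (s : seq T) (F : T -> R) :
  (forall x, x \in s -> 0 <= F x) -> \sum_(x <- s) F x = 0 -> forall x, x \in s -> F x = 0.
Proof.
elim: s => // a s IH H; rewrite big_cons => /eqP; rewrite paddr_eq0.
- case/andP => /eqP Ha /eqP Hs x; rewrite inE => /orP [/eqP -> // | Hx].
  by apply: IH => // y Hy; apply: H; rewrite inE Hy orbT.
- by apply: H; exact: mem_head.
- by rewrite big_seq; apply: sumr_ge0 => y Hy; apply: H; rewrite inE Hy orbT.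
Qed.

Definition fc (x : 'rV[R]_m) : 'rV[R]_m := \row_i ((Num.ceil (x ord0 i))%:~R).
Definition ff (x : 'rV[R]_m) : 'rV[R]_m := \row_i ((Num.floor (x ord0 i))%:~R).

Lemma fc_lat x : in_box u x -> fc x \in box_lattice u.
Proof.
move=> /forallP Hb; rewrite inE; apply/andP; split; apply/forallP => i; rewrite mxE; last exact: intr_int.
case/andP: (Hb i) => H0 H1; apply/andP; split.
  exact: le_trans H0 (ceil_ge _).
by rewrite pmulrn ler_int ceil_le_int -pmulrn.
Qed.

Lemma ff_lat x : in_box u x -> ff x \in box_lattice u.
Proof.
move=> /forallP Hb; rewrite inE; apply/andP; split; apply/forallP => i; rewrite mxE; last exact: intr_int.
case/andP: (Hb i) => H0 H1; apply/andP; split.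
  by rewrite ler0z floor_ge0.
exact: le_trans (floor_le _) H1.
Qed.

Lemma fc_near x y : fc x = fc y -> dist_inf x y < 1.
Proof.
move=> E; apply: dist_lt1 => i.
have := congr1 (fun v : 'rV[R]_m => v ord0 i) E; rewrite !mxE => /eqP; rewrite eqr_int => /eqP H.
have := ceil_itv (x ord0 i); have := ceil_itv (y ord0 i); rewrite H intrB.
by rewrite ltr_norml => /andP [? ?] /andP [? ?]; apply/andP; split; lra.
Qed.

Lemma ff_near x y : ff x = ff y -> dist_inf x y < 1.
Proof.
move=> E; apply: dist_lt1 => i.
have := congr1 (fun v : 'rV[R]_m => v ord0 i) E; rewrite !mxE => /eqP; rewrite eqr_int => /eqP H.
have := floor_itv (x ord0 i); have := floor_itv (y ord0 i); rewrite H intrD.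
by rewrite ltr_norml => /andP [? ?] /andP [? ?]; apply/andP; split; lra.
Qed.

Lemma main (C : seq 'rV[R]_m) : is_code u (\prod_(i < m) (u i).+1)%N C ->
  (forall x y, x \in C -> y \in C -> x != y -> 1 <= dist_inf x y) -> C =i box_lattice u.
Proof.
case=> HU HS HB HD.
have HBx x : x \in C -> in_box u x by move=> Hx; exact: (allP HB).
have injP (g : 'rV[R]_m -> 'rV[R]_m) :
    (forall x y, g x = g y -> dist_inf x y < 1) ->
    (forall x, in_box u x -> g x \in box_lattice u) -> perm_eq (map g C) Lat.
  move=> Hg Hl.
  have Hu : uniq (map g C).
    rewrite map_inj_in_uniq // => x y Hx Hy E; apply/eqP; apply/negPn/negP => Hxy.
    by have := HD x y Hx Hy Hxy; rewrite leNgt Hg.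
  apply: uniq_perm => //; first exact: Lat_uniq.
  have Hsub : {subset map g C <= Lat}.
    by move=> v /mapP [x Hx ->]; rewrite Lat_mem Hl // HBx.
  have Hsz : (size Lat <= size (map g C))%N by rewrite size_map HS Lat_size.
  by have [_ E] := uniq_min_size Hu Hsub Hsz.
have Pc := injP fc fc_near fc_lat.
have Pf := injP ff ff_near ff_lat.
pose S := fun v : 'rV[R]_m => \sum_i v ord0 i.
have : \sum_(v <- map fc C) S v = \sum_(v <- map ff C) S v.
  by rewrite (perm_big _ Pc) (perm_big _ Pf).
rewrite !big_map => E1.
have E2 : \sum_(x <- C) (S (fc x) - S (ff x)) = 0 by rewrite sumrB E1 subrr.
have Hnn x i : (ff x) ord0 i <= (fc x) ord0 i.
  by rewrite !mxE; exact: le_trans (floor_le _) (ceil_ge _).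
have Hge x : 0 <= S (fc x) - S (ff x).
  by rewrite subr_ge0 /S; apply: ler_sum => i _; exact: Hnn.
have E3 := seq_psum_eq0 (fun x _ => Hge x) E2.
have Hint x : x \in C -> forall i, x ord0 i \is a Num.int.
  move=> Hx i; have := E3 x Hx; rewrite /S -sumrB => E.
  have Hz : forall j : 'I_m, true -> 0 <= fc x ord0 j - ff x ord0 j.
    by move=> j _; rewrite subr_ge0.
  have /(_ i isT) := psumr_eq0P Hz E.
  rewrite !mxE => /eqP; rewrite subr_eq0 => /eqP Eq.
  rewrite intrEfloor eq_le floor_le /= -Eq; exact: ceil_ge.
have Hsub : {subset C <= Lat}.
  by move=> x Hx; rewrite Lat_mem inE HBx //=; apply/forallP; apply: Hint.
have Hsz : (size Lat <= size C)%N by rewrite HS Lat_size.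
have [_ E] := uniq_min_size HU Hsub Hsz.
by move=> x; rewrite -Lat_mem; exact: E.
Qed.


Lemma pair_of_delta (C : seq 'rV[R]_m) : 1 <= delta C ->
  forall x y, x \in C -> y \in C -> x != y -> 1 <= dist_inf x y.
Proof. by move=> H x y Hx Hy Hxy; exact: le_trans H (delta_le (mem_code_dists Hx Hy Hxy)). Qed.

End S.

Unset Implicit Arguments. Set Strict Implicit.

Theorem lemma4p3 (R : realType) (m : nat) (u : 'I_m -> nat) :
  let N := (\prod_(i < m) (u i).+1)%N in
  (exists C : seq 'rV[R]_m, optimal_code u N C /\ C =i @box_lattice R m u) /\
  (forall C : seq 'rV[R]_m, optimal_code u N C -> C =i @box_lattice R m u).
Proof.
move=> N.
set L := @Lat R m u.
have HLc : is_code u N L.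
  split; [exact: Lat_uniq | exact: Lat_size |].
  by apply/allP => x; rewrite Lat_mem inE => /andP [].
have HLm : L =i box_lattice u by move=> x; rewrite Lat_mem.
have HLd : forall x y, x \in L -> y \in L -> x != y -> 1 <= dist_inf x y.
  move=> x y; rewrite !Lat_mem !inE => /andP [_ /forallP Hx] /andP [_ /forallP Hy] Hxy.
  case: (pickP (fun i => x ord0 i != y ord0 i)) => [i Hi | H].
    exact: le_trans (int_dist (Hx i) (Hy i) Hi) (dist_ge _ _ i).
  case/eqP: Hxy; apply/rowP => j.
  by have := H j => /= /negbFE /eqP.
case: (leqP N 1) => HN.
  have Hsm C : is_code u N C -> delta C = 0.
    by case=> _ HS _; apply: small_delta; rewrite HS.
  split.
    exists L; split => //; split => // C' HC'; by rewrite !Hsm.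
  move=> C [HC _]; apply: main => // x y Hx Hy Hxy; case/eqP: Hxy.
  by apply: small_eq Hx Hy; case: HC => _ -> _.
have HdL : 1 <= delta L.
  apply: delta_ge; first by apply: large_dists; [exact: Lat_uniq | rewrite Lat_size].
  by move=> d /code_dists_mem [x [y [Hx Hy Hxy ->]]]; exact: HLd.
have [i Hi] : exists i, (0 < u i)%N.
  case: (pickP (fun i => (0 < u i)%N)) => [i Hi | H]; first by exists i.
  move: HN; rewrite /N big1 // => i _; have := H i; by case: (u i).
pose x0 : 'rV[R]_m := 0.
pose x1 : 'rV[R]_m := \row_j (if j == i then 1 else 0).
have Hx0 : x0 \in L.
  rewrite Lat_mem inE /in_box; apply/andP; split; apply/forallP => j; rewrite mxE ?lexx ?ler0n //.
have Hx1 : x1 \in L.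
  rewrite Lat_mem inE /in_box; apply/andP; split; apply/forallP => j; rewrite mxE.
    case: eqP => [->|_]; last by rewrite lexx ler0n.
    by rewrite ler01 /= -(ler_nat R 1) in Hi *.
  by case: eqP => _; [exact: rpred1 | exact: rpred0].
have Hd01 : dist_inf x0 x1 = 1.
  apply/eqP; rewrite eq_le; apply/andP; split.
    apply: dist_le1 => j; rewrite !mxE; case: eqP => _.
      by rewrite sub0r normrN normr1.
    by rewrite subr0 normr0 ler01.
  by apply: le_trans (dist_ge x0 x1 i); rewrite !mxE eqxx sub0r normrN normr1.
have H01 : x0 != x1.
  apply/eqP => /rowP /(_ i); rewrite !mxE eqxx => /eqP; by rewrite eq_sym oner_eq0.
have Hopt : forall C', is_code u N C' -> delta C' <= delta L.
  move=> C' HC'; case: (ltP (delta C') 1) => H1; first exact: le_trans (ltW H1) HdL.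
  have HE : C' =i box_lattice u := main HC' (pair_of_delta H1).
  have Hx0' : x0 \in C' by rewrite HE -HLm.
  have Hx1' : x1 \in C' by rewrite HE -HLm.
  apply: le_trans HdL; rewrite -Hd01; apply: delta_le; exact: mem_code_dists.
split.
  by exists L.
move=> C [HC HCo]; apply: main => //; apply: pair_of_delta.
exact: le_trans HdL (HCo L HLc).
Qed.
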